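(* Let $T\in V^+$ with $\operatorname{rank}_+(T)>r$, and let $X$ be a minimizer of $\|T-X\|$ over $X\in D_r^+$. Then $\operatorname{rank}_+(X)=r$.
   Context: For $i=1,\dots,d$, $V_i$ is a real vector space of dimension $n_i$ with a fixed basis; $V_i^+$ is the cone of vectors with nonnegative coordinates. $V=V_1\otimes\cdots\otimes V_d$ with induced basis and Hilbert–Schmidt (coordinate $\ell^2$) norm $\|\cdot\|$; $V^+$ is the set of tensors with nonnegative coordinates. $\operatorname{rank}_+(T)$ is the least $r$ with $T=\sum_{p=1}^r u_{1,p}\otimes\cdots\otimes u_{d,p}$, $u_{i,p}\in V_i^+$ (with $\operatorname{rank}_+(0)=0$); $D_r^+=\{X\in V^+:\operatorname{rank}_+(X)\le r\}$. *)

(* Defs.v *)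
From HB Require Import structures.
From mathcomp Require Import all_boot all_order all_algebra.
Set Implicit Arguments. Unset Strict Implicit. Unset Printing Implicit Defensive.
Import Order.TTheory GRing.Theory Num.Theory.
Local Open Scope ring_scope.

(* multi-indices of V = V_1 ⊗ ... ⊗ V_d, dim V_i = n i *)
Definition midx (d : nat) (n : 'I_d -> nat) : finType :=
  {dffun forall i : 'I_d, 'I_(n i)}.

(* tensors = coordinate arrays in the induced basis *)
Definition tensor (R : rcfType) (d : nat) (n : 'I_d -> nat) := midx n -> R.

Definition nonneg_tensor (R : rcfType) d (n : 'I_d -> nat) (T : tensor R n) : Prop :=
  forall idx, 0 <= T idx.

Definition hsnorm (R : rcfType) d (n : 'I_d -> nat) (T : tensor R n) : R :=
  Num.sqrt (\sum_(idx : midx n) T idx ^+ 2).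

(* Padding by zero terms makes
   "exactly r terms" equivalent to "at most r terms". *)
Definition nnrank_le (R : rcfType) d (n : 'I_d -> nat) (T : tensor R n) (r : nat) : Prop :=
  exists u : 'I_r -> forall i : 'I_d, 'I_(n i) -> R,
    (forall p i j, 0 <= u p i j) /\
    (forall idx : midx n, T idx = \sum_(p < r) \prod_(i < d) u p i (idx i)).

Definition is_nnrank (R : rcfType) d (n : 'I_d -> nat) (T : tensor R n) (k : nat) : Prop :=
  nnrank_le T k /\ (forall m, (m < k)%N -> ~ nnrank_le T m).

Definition in_Dr (R : rcfType) d (n : 'I_d -> nat) (r : nat) (X : tensor R n) : Prop :=
  nonneg_tensor X /\ nnrank_le X r.

(* Main.v *)
Require Import Defs.
From HB Require Import structures.
From mathcomp Require Import all_boot all_order all_algebra.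
From mathcomp.algebra_tactics Require Import ring lra.
Set Implicit Arguments. Unset Strict Implicit. Unset Printing Implicit Defensive.
Import Order.TTheory GRing.Theory Num.Theory.
Local Open Scope ring_scope.


Lemma prod_scale (R : rcfType) (d : nat) (i0 : 'I_d) c (w : 'I_d -> R) :
  \prod_(i < d) (if i == i0 then c * w i else w i) = c * \prod_(i < d) w i.
Proof.
rewrite (bigD1 i0) //= eqxx [in RHS](bigD1 i0) //= -mulrA; congr (_ * (_ * _)).
by apply: eq_bigr => i /negbTE ->.
Qed.

Lemma prod_zero (R : rcfType) (d : nat) (i0 : 'I_d) : \prod_(i < d) (0 : R) = 0.
Proof. by rewrite (bigD1 i0) //= mul0r. Qed.

Lemma scale_le (R : rcfType) (d : nat) (n : 'I_d -> nat) (i0 : 'I_d) (X : tensor R n) r c : 0 <= c -> nnrank_le X r ->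
  nnrank_le (fun idx => c * X idx) r.
Proof.
move=> c0 [u [u0 uX]].
exists (fun p i j => if i == i0 then c * u p i j else u p i j); split.
  by move=> p i j; case: (i == i0) => //; apply: mulr_ge0.
move=> idx; rewrite uX mulr_sumr; apply: eq_bigr => p _.
by rewrite -(prod_scale i0 c (fun i => u p i (idx i))); apply: eq_bigr => i _; case: (i == i0).
Qed.

Lemma pad (R : rcfType) (d : nat) (n : 'I_d -> nat) (i0 : 'I_d) (X : tensor R n) m r : (m <= r)%N -> nnrank_le X m -> nnrank_le X r.
Proof.
move=> mr [u [u0 uX]].
pose U (k : nat) : forall i : 'I_d, 'I_(n i) -> R :=
  oapp u (fun _ _ => 0) (insub k : option 'I_m).
exists (fun p => U (val p)); split.
  move=> p i j; rewrite /U; case: insub => [q|] /=; [exact: u0 | exact: lexx].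
move=> idx; rewrite uX.
have E : forall p : 'I_r, \prod_(i < d) U p i (idx i) = (fun k : nat => \prod_(i < d) U k i (idx i)) p by [].
rewrite (eq_bigr _ (fun p _ => E p)) -(big_mkord xpredT (fun k : nat => \prod_(i < d) U k i (idx i))).
rewrite (big_cat_nat (leq0n m) mr).
have Z : \sum_(m <= k < r) \prod_(i < d) U k i (idx i) = 0.
  rewrite big1_seq // => k /andP[_]; rewrite mem_index_iota; case/andP => mk _.
  rewrite /U; have -> : (insub k : option 'I_m) = None by rewrite insubF // ltnNge mk.
  exact: prod_zero.
rewrite Z Monoid.mulm1.
rewrite big_mkord.
apply: eq_bigr => p _.
by rewrite /U valK.
Qed.

Lemma add1 (R : rcfType) (d : nat) (n : 'I_d -> nat) (i0 : 'I_d) (X : tensor R n) m c (v : forall i, 'I_(n i) -> R) :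
  0 <= c -> (forall i j, 0 <= v i j) -> nnrank_le X m ->
  nnrank_le (fun idx => X idx + c * \prod_(i < d) v i (idx i)) m.+1.
Proof.
move=> c0 v0 [u [u0 uX]].
pose w := fun i j => if i == i0 then c * v i j else v i j.
exists (fun p : 'I_m.+1 => oapp u w (insub (val p) : option 'I_m)); split.
  move=> p i j; case: insub => [q|] //=; rewrite /w; case: (i == i0) => //; exact: mulr_ge0.
move=> idx; rewrite big_ord_recr /= uX; congr (_ + _).
  by apply: eq_bigr => p _; rewrite valK.
rewrite insubF ?ltnn //= -(prod_scale i0 c (fun i => v i (idx i))).
by apply: eq_bigr => i _; rewrite /w; case: (i == i0).
Qed.

Lemma main_pos (R : rcfType) (d : nat) (n : 'I_d.+1 -> nat) (r : nat)
  (T X : tensor R n) :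
  nonneg_tensor T ->
  ~ nnrank_le T r ->
  in_Dr r X ->
  (forall Y : tensor R n, in_Dr r Y ->
     hsnorm (fun idx => T idx - X idx) <= hsnorm (fun idx => T idx - Y idx)) ->
  is_nnrank X r.
Proof.
move=> T0 nT [X0 Xr] Xmin.
pose N (Y : tensor R n) := \sum_(idx : midx n) (T idx - Y idx) ^+ 2.
have Nmin : forall Y, in_Dr r Y -> N X <= N Y.
  move=> Y /Xmin; rewrite /hsnorm ler_sqrt //; apply: sumr_ge0 => i _; exact: sqr_ge0.
split => // m mr Xm.
have stepA : forall idx0, T idx0 <= X idx0.
  move=> idx0; rewrite leNgt; apply/negP => lt.
  pose c := T idx0 - X idx0.
  have cpos : 0 < c by rewrite /c subr_gt0.
  pose v := fun (i : 'I_d.+1) (j : 'I_(n i)) => ((j == idx0 i)%:R : R).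
  have v0 : forall i j, 0 <= v i j by move=> i j; rewrite /v ler0n.
  pose Y := fun idx => X idx + c * \prod_(i < d.+1) v i (idx i).
  have HY : nnrank_le Y m.+1 by apply: (add1 ord0 (ltW cpos) v0 Xm).
  have Yr : in_Dr r Y.
    split; last exact: (pad ord0 mr HY).
    move=> idx; rewrite /Y addr_ge0 // mulr_ge0 ?(ltW cpos) //.
    by apply: prodr_ge0 => i _.
  have prodE : forall idx : midx n, \prod_(i < d.+1) v i (idx i) = ((idx == idx0)%:R : R).
    move=> idx; case: eqP => [->| ne].
      by apply: big1 => i _; rewrite /v eqxx.
    case: (pickP (fun i => idx i != idx0 i)) => [i hi | all].
      by rewrite (bigD1 i) //= /v (negbTE hi) mul0r.
    exfalso; apply: ne; apply/ffunP => i.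
    by move: (all i) => /= /negbFE /eqP.
  have := Nmin Y Yr; rewrite /N (bigD1 idx0) //= [Z in _ <= Z](bigD1 idx0) //=.
  rewrite /Y (prodE idx0) eqxx mulr1.
  have -> : T idx0 - (X idx0 + c) = 0 by rewrite /c; ring.
  rewrite [Z in _ <= _ + Z](eq_bigr (fun idx => (T idx - X idx) ^+ 2)); last first.
    by move=> idx /negbTE ne; rewrite (prodE idx) ne mulr0 addr0.
  rewrite (_ : (0:R) ^+ 2 = 0) ?add0r; last by rewrite expr2 mul0r.
  move=> H; have h2 := exprn_gt0 2 cpos; rewrite /c in h2; lra.
pose S := \sum_(idx : midx n) (T idx - X idx) * X idx.
pose Q := \sum_(idx : midx n) X idx ^+ 2.
have expand : forall t, N (fun idx => t * X idx) = N X + 2 * (1 - t) * S + (1 - t) ^+ 2 * Q.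
  move=> t; rewrite /N /S /Q mulr_sumr [Z in _ + Z]mulr_sumr -!big_split /=.
  by apply: eq_bigr => idx _; ring.
have Sge : 0 <= S.
  rewrite leNgt; apply/negP => Sneg.
  have Q0 : 0 <= Q by apply: sumr_ge0 => i _; exact: sqr_ge0.
  pose D := Q - S.
  have Dpos : 0 < D by rewrite /D; lra.
  pose s := - S / D.
  have spos : 0 < s by rewrite /s divr_gt0 // oppr_gt0.
  have sD : s * D = - S by rewrite /s divfK // gt_eqF.
  have sQ : s * (s * Q) <= s * (s * D).
    by rewrite ler_pM2l // ler_pM2l // /D lerDl oppr_ge0 ltW.
  have tr : in_Dr r (fun idx => (1 - s) * X idx).
    have s1 : s <= 1.
      rewrite -(ler_pM2r Dpos) mul1r sD /D; lra.
    split.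
      by move=> idx; rewrite mulr_ge0 // subr_ge0.
    by apply: (scale_le ord0); rewrite ?subr_ge0.
  have := Nmin _ tr; rewrite expand.
  have -> : 1 - (1 - s) = s by ring.
  move=> H.
  have e1 : s ^+ 2 * Q = s * (s * Q) by ring.
  have e2 : s * (s * D) = - (s * S) by rewrite sD; ring.
  have sS : s * S < 0 by rewrite pmulr_rlt0.
  have e3 : 2 * s * S = 2 * (s * S) by ring.
  rewrite e1 e3 in H; lra.
have term0 : forall idx, (T idx - X idx) * X idx = 0.
  have le0 : forall idx, (T idx - X idx) * X idx <= 0.
    by move=> idx; rewrite mulr_le0_ge0 // subr_le0.
  have : \sum_(idx : midx n) - ((T idx - X idx) * X idx) == 0.
    rewrite sumrN oppr_eq0 eq_le Sge andbT.
    by apply: sumr_le0 => i _; exact: le0.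
  rewrite psumr_eq0; last by move=> i _; rewrite oppr_ge0.
  move=> /allP H idx; apply/eqP; rewrite -oppr_eq0.
  by apply: H; rewrite mem_index_enum.
have TX : forall idx, T idx = X idx.
  move=> idx; have := term0 idx; move/eqP; rewrite mulf_eq0 => /orP[|/eqP X0'].
    by rewrite subr_eq0 => /eqP.
  apply/eqP; rewrite eq_le stepA X0' /=; exact: T0.
apply: nT; case: Xr => u [u0 uX]; exists u; split => // idx.
by rewrite TX uX.
Qed.

Lemma rank_d0 (R : rcfType) (n : 'I_0 -> nat) (X : tensor R n) k idx :
  nnrank_le X k -> X idx = k%:R.
Proof.
case=> u [_ uX]; rewrite uX.
rewrite (eq_bigr (fun _ => 1)); last by move=> p _; rewrite big_ord0.
by rewrite sumr_const card_ord.
Qed.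

Theorem mainTheorem5 (R : rcfType) (d : nat) (n : 'I_d -> nat) (r : nat)
  (T X : tensor R n) :
  nonneg_tensor T ->
  ~ nnrank_le T r ->
  in_Dr r X ->
  (forall Y : tensor R n, in_Dr r Y ->
     hsnorm (fun idx => T idx - X idx) <= hsnorm (fun idx => T idx - Y idx)) ->
  is_nnrank X r.
Proof.
case: d n T X => [|d] n T X; last exact: main_pos.
move=> _ _ [_ Xr] _; split => // m mr Xm.
have idx : midx n by apply: finfun => i; case: i.
have := rank_d0 idx Xr; rewrite (rank_d0 idx Xm) => /eqP.
by rewrite eqr_nat => /eqP E; rewrite E ltnn in mr.
Qed.
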